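(* Let $\mathcal X$ be a finite abelian group, $\mathcal Z$ a finite set, $P_{XZ}$ a distribution on $\mathcal X\times\mathcal Z$ and $W_{XZ|X}(x,z|x'):=P_{XZ}(x-x',z)$ the associated conditional additive channel. For any finite set $\mathcal M$ and distribution $P_M$ on $\mathcal M$: (1) for every $s\in(0,1)$, \[P_{js}(P_M,W_{XZ|X})\le\Big(\frac{e^{H_{1-s}(M)+H^{\downarrow}_{1-s}(X|Z)}}{|\mathcal X|}\Big)^{s};\] (2) for every $s\in(0,\tfrac12]$, \[P_{js}(P_M,W_{XZ|X})\le\Big(\frac{e^{H_{1-s}(M)+H^{\uparrow}_{1-s}(X|Z)}}{|\mathcal X|}\Big)^{\frac{s}{1-s}}.\]
   Context: A code $\phi=(\mathsf e,\mathsf d)$ consists of $\mathsf e:\mathcal M\to\mathcal X$ and $\mathsf d:\mathcal X\times\mathcal Z\to\mathcal M$; $P_{js}[\phi|P_M,W]:=\sum_m P_M(m)W(\{y:\mathsf d(y)\ne m\}|\mathsf e(m))$ and $P_{js}(P_M,W):=\inf_\phi P_{js}[\phi|P_M,W]$. $H_{1-s}(M):=\frac1s\log\sum_mP_M(m)^{1-s}$. For a distribution $Q_Z$ on $\mathcal Z$, $H_{1-s}(P_{XZ}|Q_Z):=\frac1s\log\sum_{x,z}P_{XZ}(x,z)^{1-s}Q_Z(z)^s$ (sum over the support of $P_{XZ}$). $H^{\downarrow}_{1-s}(X|Z):=H_{1-s}(P_{XZ}|P_Z)$ with $P_Z$ the marginal, and $H^{\uparrow}_{1-s}(X|Z):=H_{1-s}(P_{XZ}|P_Z^{(1-s)})$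 where $P_Z^{(1-s)}(z):=\big[\sum_xP_{XZ}(x,z)^{1-s}\big]^{\frac1{1-s}}\big/\sum_{z'}\big[\sum_xP_{XZ}(x,z')^{1-s}\big]^{\frac1{1-s}}$. *)

(* Defs.v *)
From HB Require Import structures.
From mathcomp Require Import all_boot all_order all_algebra.
From Stdlib Require Import Reals ClassicalEpsilon.
Set Implicit Arguments. Unset Strict Implicit. Unset Printing Implicit Defensive.

Local Open Scope R_scope.

Notation "\rsum_ ( i : T ) F" := (\big[Rplus/0%R]_(i : T) F)
  (at level 41, F at level 41, i, T at level 50).

(* x^y with the convention 0^y = 0 (used only for y > 0, i.e. on/off support) *)
Definition rpow (x y : R) : R := if Rlt_dec 0 x then Rpower x y else 0.

Definition is_distr (T : finType) (P : T -> R) : Prop :=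
  (forall t, 0 <= P t) /\ \rsum_(t : T) P t = 1.

Definition is_inf (S : R -> Prop) (r : R) : Prop :=
  (forall x, S x -> r <= x) /\ (forall b, (forall x, S x -> b <= x) -> b <= r).
Definition Inf (S : R -> Prop) : R := epsilon (inhabits 0) (is_inf S).

(* channel W y x = W(y|x), output alphabet Y, input alphabet X *)
Definition Pjs_code (M X Y : finType) (PM : M -> R) (W : Y -> X -> R)
  (e : M -> X) (d : Y -> M) : R :=
  \rsum_(m : M) (PM m * \rsum_(y : Y) (if d y != m then W y (e m) else 0)).

Definition Pjs (M X Y : finType) (PM : M -> R) (W : Y -> X -> R) : R :=
  Inf (fun r => exists (e : M -> X) (d : Y -> M), r = Pjs_code PM W e d).

Definition add_channel (X : finZmodType) (Z : finType) (PXZ : X * Z -> R)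
  : X * Z -> X -> R :=
  fun xz x' => PXZ (GRing.add xz.1 (GRing.opp x'), xz.2).

(* H_{1-s}(M) *)
Definition renyiH (M : finType) (PM : M -> R) (s : R) : R :=
  / s * ln (\rsum_(m : M) rpow (PM m) (1 - s)).

(* H_{1-s}(P_XZ | Q_Z); the sum is over the support of P_XZ *)
Definition renyiH_cond (X Z : finType) (PXZ : X * Z -> R) (QZ : Z -> R) (s : R) : R :=
  / s * ln (\rsum_(xz : X * Z)
     (if Rlt_dec 0 (PXZ xz) then Rpower (PXZ xz) (1 - s) * rpow (QZ xz.2) s else 0)).

Definition marginalZ (X Z : finType) (PXZ : X * Z -> R) (z : Z) : R :=
  \rsum_(x : X) PXZ (x, z).

Definition tiltedZ (X Z : finType) (PXZ : X * Z -> R) (s : R) (z : Z) : R :=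
  let g := fun z' => rpow (\rsum_(x : X) rpow (PXZ (x, z')) (1 - s)) (/ (1 - s)) in
  g z / \rsum_(z' : Z) g z'.

Definition renyiH_down (X Z : finType) (PXZ : X * Z -> R) (s : R) : R :=
  renyiH_cond PXZ (marginalZ PXZ) s.

Definition renyiH_up (X Z : finType) (PXZ : X * Z -> R) (s : R) : R :=
  renyiH_cond PXZ (tiltedZ PXZ s) s.

(* Main.v *)
Require Import Defs.
From HB Require Import structures.
From mathcomp Require Import all_boot all_order all_algebra.
From mathcomp Require Import Rstruct.
From Stdlib Require Import Reals ClassicalEpsilon Classical Lra.
Set Implicit Arguments. Unset Strict Implicit. Unset Printing Implicit Defensive.
Local Open Scope R_scope.

Section Helpers.
Variable I : finType.

Lemma rsum_le (F G : I -> R) : (forall i, F i <= G i) ->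
  \big[Rplus/0]_(i : I) F i <= \big[Rplus/0]_(i : I) G i.
Proof.
move=> H; apply: (big_ind2 (fun x y => x <= y)) => //; first lra.
by move=> *; apply: Rplus_le_compat.
Qed.

Lemma rsum_ge0 (F : I -> R) : (forall i, 0 <= F i) -> 0 <= \big[Rplus/0]_(i : I) F i.
Proof.
move=> H; apply: (big_ind (fun x => 0 <= x)) => //; first lra.
by move=> *; lra.
Qed.

Lemma rsum_const (a : R) : \big[Rplus/0]_(i : I) a = INR #|I| * a.
Proof.
rewrite big_const; elim: #|I| => [|k IH]; first by rewrite /=; lra.
rewrite iterS IH S_INR; lra.
Qed.

Lemma rsum_distrl (a : R) (F : I -> R) :
  a * \big[Rplus/0]_(i : I) F i = \big[Rplus/0]_(i : I) (a * F i).
Proof. by rewrite big_distrr. Qed.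

Lemma rsum_distrr (a : R) (F : I -> R) :
  \big[Rplus/0]_(i : I) F i * a = \big[Rplus/0]_(i : I) (F i * a).
Proof. by rewrite big_distrl. Qed.

Lemma rsum_gt0 (F : I -> R) (i0 : I) : (forall i, 0 <= F i) -> 0 < F i0 ->
  0 < \big[Rplus/0]_(i : I) F i.
Proof.
move=> H H0; rewrite (bigD1 i0) //=.
have : 0 <= \big[Rplus/0]_(i | i != i0) F i.
  by apply: (big_ind (fun x => 0 <= x)) => //; [lra | move=> *; lra].
lra.
Qed.

Lemma rsum_ge_term (F : I -> R) (i0 : I) : (forall i, 0 <= F i) ->
  F i0 <= \big[Rplus/0]_(i : I) F i.
Proof.
move=> H; rewrite (bigD1 i0) //=.
have : 0 <= \big[Rplus/0]_(i | i != i0) F i.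
  by apply: (big_ind (fun x => 0 <= x)) => //; [lra | move=> *; lra].
lra.
Qed.

Lemma rsum_split (F G : I -> R) :
  \big[Rplus/0]_(i : I) (F i + G i) = \big[Rplus/0]_(i : I) F i + \big[Rplus/0]_(i : I) G i.
Proof. by rewrite big_split. Qed.

End Helpers.

Lemma exp_le x y : x <= y -> exp x <= exp y.
Proof. case/Rle_lt_or_eq_dec => [h|->]; [apply/Rlt_le/exp_increasing/h | lra]. Qed.

Lemma Rpower_pos x y : 0 < Rpower x y.
Proof. rewrite /Rpower; apply: exp_pos. Qed.

Lemma min_le_pow t r : 0 < t -> 0 < r <= 1 -> Rmin 1 t <= Rpower t r.
Proof.
move=> ht hr; rewrite /Rpower.
case: (Rle_lt_dec 0 (ln t)) => hl.
- apply: Rle_trans (Rmin_l _ _) _.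
  rewrite -exp_0; apply: exp_le; nra.
- apply: Rle_trans (Rmin_r _ _) _.
  rewrite -{1}(exp_ln t ht); apply: exp_le; nra.
Qed.

Lemma Inf_le (S : R -> Prop) x : (forall y, S y -> 0 <= y) -> S x -> Inf S <= x.
Proof.
move=> H0 Sx.
have [r Hr] : exists r, is_inf S r.
  have Hb : bound (fun y => S (- y)).
    by exists 0 => y Sy; have := H0 _ Sy; lra.
  have He : exists y, S (- y) by exists (- x); rewrite Ropp_involutive.
  case: (completeness _ Hb He) => m [Hub Hlub].
  exists (- m); split.
  - move=> y Sy; have : - y <= m by apply: Hub; rewrite Ropp_involutive.
    lra.
  - move=> b Hbnd; have : m <= - b.
      apply: Hlub => y Sy; have := Hbnd _ Sy; lra.
    lra.
have := epsilon_spec (inhabits 0) (is_inf S) (ex_intro _ r Hr).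
rewrite -/(Inf S) => -[H _]; exact: H.
Qed.

Lemma Pjs_le (M X Y : finType) (PM : M -> R) (W : Y -> X -> R) e d :
  (forall m, 0 <= PM m) -> (forall y x, 0 <= W y x) ->
  Pjs PM W <= Pjs_code PM W e d.
Proof.
move=> HP HW; apply: Inf_le; last by exists e, d.
move=> y [e' [d' ->]]; apply: rsum_ge0 => m; apply: Rmult_le_pos => //.
apply: rsum_ge0 => y'; case: (_ != _) => //; lra.
Qed.

Definition ileR (a b : R) : R := if Rle_dec a b then 1 else 0.
Lemma ileR_ge0 a b : 0 <= ileR a b.
Proof. rewrite /ileR; case: Rle_dec => h /=; lra. Qed.

Section Core.
Variables (X : finZmodType) (Z M : finType).
Variables (PXZ : X * Z -> R) (PM : M -> R) (m0 : M).
Hypotheses (HPXZ : forall xz, 0 <= PXZ xz) (HPM : forall m, 0 <= PM m).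

Definition score (f : {ffun M -> X}) (y : X * Z) (m : M) : R :=
  PM m * add_channel PXZ y (f m).

Definition dec (f : {ffun M -> X}) (y : X * Z) : M :=
  Order.arg_max m0 xpredT (score f y).

Lemma dec_max f y m : score f y m <= score f y (dec f y).
Proof.
rewrite /dec; case: (@Order.TotalTheory.arg_maxP _ _ M m0 xpredT (score f y) isT) => i _ H.
by apply/RleP; apply: H.
Qed.

Definition Nf (f : {ffun M -> X}) (m : M) (xz : X * Z) : R :=
  \big[Rplus/0]_(m' : M) (if m' != m then
     ileR (PM m * PXZ xz) (score f (GRing.add xz.1 (f m), xz.2) m') else 0).

Lemma Nf_ge0 f m xz : 0 <= Nf f m xz.
Proof. apply: rsum_ge0 => m'; case: (_ != _); [apply: ileR_ge0 | lra]. Qed.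

Lemma claim1 (f : {ffun M -> X}) : Pjs_code PM (add_channel PXZ) f (dec f) <=
  \big[Rplus/0]_(m : M) \big[Rplus/0]_(xz : X * Z) (PM m * PXZ xz * Rmin 1 (Nf f m xz)).
Proof.
rewrite /Pjs_code; apply: rsum_le => m.
have hinj : injective (fun xz : X * Z => (GRing.add xz.1 (f m), xz.2)).
  by move=> [a b] [c d] /= [/GRing.addIr -> ->].
rewrite (reindex_inj hinj) /= rsum_distrl; apply: rsum_le => -[x z] /=.
rewrite Rmult_assoc; apply: Rmult_le_compat_l => //.
have hN := Nf_ge0 f m (x, z).
have hsc : score f (GRing.add x (f m), z) m = PM m * PXZ (x, z).
  by rewrite /score /add_channel /= GRing.addrK.
rewrite /add_channel /= GRing.addrK.
case E: (_ != _); last first.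
  apply: Rmult_le_pos; [exact: HPXZ | apply: Rmin_glb; [exact: Rle_0_1 | exact: hN]].
have h1 : 1 <= Nf f m (x, z).
  rewrite /Nf; apply: Rle_trans (rsum_ge_term (dec f (GRing.add x (f m), z)) _).
  - rewrite E /ileR; case: Rle_dec => h /=; first lra.
    by exfalso; apply: h; rewrite -hsc; apply: dec_max.
  - by move=> i; case: (_ != _); [apply: ileR_ge0 | lra].
rewrite Rmin_left //; lra.
Qed.

Definition phi (m : M) (v : X) (f : {ffun M -> X}) : {ffun M -> X} :=
  [ffun k => if k == m then GRing.add (f k) v else f k].

Lemma phi_inj m v : injective (phi m v).
Proof.
move=> f1 f2 /ffunP H; apply/ffunP => k; have := H k; rewrite !ffunE.
by case: (k == m) => //; apply: GRing.addIr.
Qed.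

Lemma count_ffun (m m' : M) (a : X) (g : X -> R) : m' != m ->
  INR #|X| * \big[Rplus/0]_(f : {ffun M -> X})
      g (GRing.add (GRing.add a (f m)) (GRing.opp (f m')))
  = \big[Rplus/0]_(f : {ffun M -> X}) 1 * \big[Rplus/0]_(u : X) g u.
Proof.
move=> hm.
set G := fun f : {ffun M -> X} => g (GRing.add (GRing.add a (f m)) (GRing.opp (f m'))).
rewrite -(@rsum_const X).
rewrite (eq_bigr (fun v => \big[Rplus/0]_(f : {ffun M -> X}) G (phi m v f))); last first.
  by move=> v _; rewrite (reindex_inj (@phi_inj m v)).
rewrite exchange_big /= rsum_distrr; apply: eq_bigr => f _.
rewrite Rmult_1_l.
have hinj : injective (fun v => GRing.add (GRing.add a (GRing.add (f m) v)) (GRing.opp (f m'))).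
  by move=> v1 v2 /GRing.addIr /GRing.addrI /GRing.addrI.
rewrite [RHS](reindex_inj hinj); apply: eq_bigr => v _.
by rewrite /G !ffunE eqxx (negbTE hm).
Qed.


Definition K (m : M) (xz : X * Z) : R :=
  \big[Rplus/0]_(m' : M) \big[Rplus/0]_(u : X) ileR (PM m * PXZ xz) (PM m' * PXZ (u, xz.2)).

Lemma nX_gt0 : 0 < INR #|X|.
Proof. apply: lt_0_INR; apply/ltP; apply/card_gt0P; by exists (@GRing.zero X). Qed.

Lemma K_ge0 m xz : 0 <= K m xz.
Proof. by apply: rsum_ge0 => m'; apply: rsum_ge0 => u; apply: ileR_ge0. Qed.

Lemma claim2 m x z :
  \big[Rplus/0]_(f : {ffun M -> X}) Rmin 1 (Nf f m (x, z)) <=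
  \big[Rplus/0]_(f : {ffun M -> X}) 1 * Rmin 1 (K m (x, z) / INR #|X|).
Proof.
set F := \big[Rplus/0]_(f : {ffun M -> X}) 1.
have hF : 0 <= F by apply: rsum_ge0 => _; exact: Rle_0_1.
have hn := nX_gt0.
have S1 : \big[Rplus/0]_(f : {ffun M -> X}) Rmin 1 (Nf f m (x, z)) <= F.
  by apply: rsum_le => f; apply: Rmin_l.
have S2 : \big[Rplus/0]_(f : {ffun M -> X}) Rmin 1 (Nf f m (x, z)) <=
          F / INR #|X| * K m (x, z).
  apply: Rle_trans (_ : \big[Rplus/0]_(f : {ffun M -> X}) Nf f m (x, z) <= _).
    by apply: rsum_le => f; apply: Rmin_r.
  rewrite /Nf exchange_big /K rsum_distrl; apply: rsum_le => m'.
  have hK' : 0 <= \big[Rplus/0]_(u : X) ileR (PM m * PXZ (x, z)) (PM m' * PXZ (u, (x, z).2)).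
    by apply: rsum_ge0 => u; apply: ileR_ge0.
  have [hm|hm] := eqVneq m' m.
    rewrite big1 //.
    apply: Rmult_le_pos => //; apply: Rmult_le_pos => //; apply: Rlt_le; apply: Rinv_0_lt_compat.
    exact: hn.
  rewrite (eq_bigr (fun f : {ffun M -> X} => ileR (PM m * PXZ (x, z))
       (PM m' * PXZ (GRing.add (GRing.add x (f m)) (GRing.opp (f m')), z)))); last first.
    by move=> f _.
  have hc := count_ffun x (fun u => ileR (PM m * PXZ (x, z)) (PM m' * PXZ (u, z))) hm.
  simpl in hc.
  apply: Req_le.
  apply: (Rmult_eq_reg_l (INR #|X|)); last by apply: Rgt_not_eq; exact: hn.
  rewrite hc -/F /=; field; apply: Rgt_not_eq; exact: hn.
have hKn : 0 <= K m (x, z) / INR #|X|.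
  by apply: Rmult_le_pos; [apply: K_ge0 | apply: Rlt_le; apply: Rinv_0_lt_compat].
case: (Rle_dec 1 (K m (x, z) / INR #|X|)) => h.
  by rewrite Rmin_left //; lra.
rewrite Rmin_right; last lra.
apply: Rle_trans S2 _; apply: Req_le; rewrite /Rdiv; ring.
Qed.

Definition Bp : R := \big[Rplus/0]_(m : M) \big[Rplus/0]_(xz : X * Z)
   (PM m * PXZ xz * Rmin 1 (K m xz / INR #|X|)).

Lemma swap3 (T : {ffun M -> X} -> M -> X * Z -> R) :
  \big[Rplus/0]_(f : {ffun M -> X}) \big[Rplus/0]_(m : M) \big[Rplus/0]_(xz : X * Z) T f m xz =
  \big[Rplus/0]_(m : M) \big[Rplus/0]_(xz : X * Z) \big[Rplus/0]_(f : {ffun M -> X}) T f m xz.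
Proof. rewrite exchange_big /=; apply: eq_bigr => m _; by rewrite exchange_big. Qed.

Lemma exists_code : exists (e : M -> X) (d : X * Z -> M),
  Pjs_code PM (add_channel PXZ) e d <= Bp.
Proof.
have Hsum : \big[Rplus/0]_(f : {ffun M -> X}) Pjs_code PM (add_channel PXZ) f (dec f)
   <= \big[Rplus/0]_(f : {ffun M -> X}) Bp.
  apply: Rle_trans (_ : _ <= \big[Rplus/0]_(f : {ffun M -> X}) \big[Rplus/0]_(m : M)
     \big[Rplus/0]_(xz : X * Z) (PM m * PXZ xz * Rmin 1 (Nf f m xz))) _.
    by apply: rsum_le => f; apply: claim1.
  rewrite /Bp swap3 swap3; apply: rsum_le => m; apply: rsum_le => -[x z].
  rewrite -!rsum_distrl; apply: Rmult_le_compat_l.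
    by apply: Rmult_le_pos.
  apply: Rle_trans (claim2 m x z) _; apply: Req_le; rewrite rsum_distrr; apply: eq_bigr => f _; by rewrite Rmult_1_l.
apply: NNPP => H.
have Hall : forall f : {ffun M -> X}, Bp < Pjs_code PM (add_channel PXZ) f (dec f).
  move=> f; apply: Rnot_le_lt => hf; apply: H; by exists f, (dec f).
have : 0 < \big[Rplus/0]_(f : {ffun M -> X}) (Pjs_code PM (add_channel PXZ) f (dec f) + - Bp).
  apply: (@rsum_gt0 _ _ [ffun=> @GRing.zero X]).
    by move=> f; have := Hall f; lra.
  by have := Hall [ffun=> @GRing.zero X]; lra.
rewrite rsum_split (rsum_const _ (- Bp)).
rewrite (rsum_const _ Bp) in Hsum.
rewrite -Ropp_mult_distr_r => h.
apply: (Rlt_irrefl 0); apply: Rlt_le_trans h _.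
apply: Rle_trans (Rplus_le_compat_r _ _ _ Hsum) _.
by apply: Req_le; apply: Rplus_opp_r.
Qed.

End Core.

Lemma rpow_ge0 x y : 0 <= rpow x y.
Proof. rewrite /rpow; case: Rlt_dec => h /=; [apply: Rlt_le; apply: Rpower_pos | apply: Rle_refl]. Qed.

Lemma rpow_pos x y : 0 < x -> rpow x y = Rpower x y.
Proof. by rewrite /rpow; case: Rlt_dec. Qed.

Lemma rpow_npos x y : ~ 0 < x -> rpow x y = 0.
Proof. by rewrite /rpow; case: Rlt_dec. Qed.

Lemma distr_pos (T : finType) (P : T -> R) : is_distr P -> exists t, 0 < P t.
Proof.
move=> [H1 H2]; apply: NNPP => H.
have : \big[Rplus/0]_(t : T) P t <= \big[Rplus/0]_(t : T) 0.
  apply: rsum_le => t; apply: Rnot_lt_le => h; apply: H; by exists t.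
rewrite H2 big1 //; lra.
Qed.

Lemma ileR_le c t : 0 < c -> 0 <= t -> ileR c t <= t / c.
Proof.
move=> hc ht; rewrite /ileR; case: Rle_dec => h /=.
- apply: (Rmult_le_reg_r c) => //; rewrite /Rdiv Rmult_assoc Rinv_l; lra.
- apply: Rmult_le_pos => //; apply: Rlt_le; exact: Rinv_0_lt_compat.
Qed.

Lemma prod_sums (I J : finType) (a : I -> R) (b : J -> R) (c : R) :
  \big[Rplus/0]_(i : I) a i * \big[Rplus/0]_(j : J) b j * c =
  \big[Rplus/0]_(i : I) \big[Rplus/0]_(j : J) (a i * b j * c).
Proof.
rewrite rsum_distrr rsum_distrr; apply: eq_bigr => i _.
rewrite rsum_distrl rsum_distrr; apply: eq_bigr => j _; ring.
Qed.

Ltac pos := repeat (apply: Rmult_lt_0_compat || apply: Rinv_0_lt_compat || apply: Rpower_pos); try assumption.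

Section Bounds.
Variables (X : finZmodType) (Z M : finType).
Variables (PXZ : X * Z -> R) (PM : M -> R).
Hypotheses (HPXZ : forall xz, 0 <= PXZ xz) (HPM : forall m, 0 <= PM m).
Hypothesis (HsumM : \big[Rplus/0]_(m : M) PM m = 1).

Definition Dt (s : R) (xz : X * Z) : R :=
  if Rlt_dec 0 (PXZ xz) then Rpower (PXZ xz) (1 - s) * rpow (marginalZ PXZ xz.2) s else 0.

Lemma Dt_ge0 s xz : 0 <= Dt s xz.
Proof.
rewrite /Dt; case: Rlt_dec => h /=; last exact: Rle_refl.
apply: Rmult_le_pos; [apply: Rlt_le; apply: Rpower_pos | apply: rpow_ge0].
Qed.

Lemma term1 s m x z : 0 < s < 1 ->
  PM m * PXZ (x, z) * Rmin 1 (K PXZ PM m (x, z) / INR #|X|) <=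
  rpow (PM m) (1 - s) * Dt s (x, z) * Rpower (INR #|X|) (- s).
Proof.
move=> hs.
have hn : 0 < INR #|X| := @nX_gt0 X.
set n := INR #|X| in hn *.
have hR : 0 <= rpow (PM m) (1 - s) * Dt s (x, z) * Rpower n (- s).
  apply: Rmult_le_pos; [apply: Rmult_le_pos; [apply: rpow_ge0 | apply: Dt_ge0] | apply: Rlt_le; apply: Rpower_pos].
have hmin : 0 <= Rmin 1 (K PXZ PM m (x, z) / n).
  apply: Rmin_glb; [exact: Rle_0_1 | apply: Rmult_le_pos; [apply: K_ge0 | apply: Rlt_le; apply: Rinv_0_lt_compat; exact: hn]].
case: (Rlt_dec 0 (PM m)) => hm; last first.
  have h0 : PM m = 0 by have := HPM m; lra.
  by rewrite h0 !Rmult_0_l; rewrite h0 in hR.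
case: (Rlt_dec 0 (PXZ (x, z))) => hp; last first.
  have h0 : PXZ (x, z) = 0 by have := HPXZ (x, z); lra.
  by rewrite h0 Rmult_0_r !Rmult_0_l.
set pz := marginalZ PXZ z.
have hpz : PXZ (x, z) <= pz.
  rewrite /pz /marginalZ; exact: (@rsum_ge_term X (fun x' => PXZ (x', z)) x (fun x' => HPXZ _)).
have hpz0 : 0 < pz by lra.
rewrite rpow_pos // /Dt /=; case: Rlt_dec => // _ /=; rewrite rpow_pos //.
set c := PM m * PXZ (x, z).
have hc : 0 < c by rewrite /c; pos.
have hK : K PXZ PM m (x, z) <= pz / c.
  rewrite /K /=.
  apply: Rle_trans (_ : _ <= \big[Rplus/0]_(m' : M) \big[Rplus/0]_(u : X) (PM m' * PXZ (u, z) * / c)) _.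
    apply: rsum_le => m'; apply: rsum_le => u; apply: ileR_le => //.
    by apply: Rmult_le_pos.
  rewrite -prod_sums HsumM /pz /marginalZ; apply: Req_le; by rewrite Rmult_1_l.
apply: Rle_trans (_ : _ <= c * Rpower (pz / c / n) s) _.
  apply: Rmult_le_compat_l; first lra.
  apply: Rle_trans (_ : _ <= Rmin 1 (pz / c / n)) _.
    apply: Rle_min_compat_l; apply: Rmult_le_compat_r; [apply: Rlt_le; apply: Rinv_0_lt_compat; exact: hn | exact: hK].
  apply: min_le_pow; [rewrite /Rdiv; pos | lra].
apply: Req_le.
have e1 : ln (pz / c / n) = ln pz - ln (PM m) - ln (PXZ (x, z)) - ln n.
  rewrite /Rdiv /c ln_mult; last by pos.
    rewrite ln_mult; [| by [] | by pos].
    rewrite ln_Rinv // ln_Rinv; last by pos.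
    rewrite ln_mult //; ring.
  by pos.
rewrite /Rpower e1 /c -{1}(exp_ln (PM m) hm) -{1}(exp_ln (PXZ (x, z)) hp) -!exp_plus.
f_equal; rewrite /pz; ring.
Qed.

Definition Am (s : R) : R := \big[Rplus/0]_(m : M) rpow (PM m) (1 - s).

Lemma bound1 s : 0 < s < 1 ->
  Bp PXZ PM <= Am s * \big[Rplus/0]_(xz : X * Z) Dt s xz * Rpower (INR #|X|) (- s).
Proof.
move=> hs; rewrite prod_sums /Bp; apply: rsum_le => m; apply: rsum_le => -[x z].
exact: term1.
Qed.

Definition Az (s : R) (z : Z) : R := \big[Rplus/0]_(u : X) rpow (PXZ (u, z)) (1 - s).

Lemma ileR_le2 c a b r : 0 < c -> 0 <= a -> 0 <= b -> 0 < r ->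
  ileR c (a * b) <= rpow a r * rpow b r * / Rpower c r.
Proof.
move=> hc ha hb hr; rewrite /ileR; case: Rle_dec => h /=; last first.
  apply: Rmult_le_pos; [apply: Rmult_le_pos; apply: rpow_ge0 | apply: Rlt_le; apply: Rinv_0_lt_compat; apply: Rpower_pos].
have hab : 0 < a * b by lra.
have ha' : 0 < a.
  case: (Rle_lt_or_eq_dec _ _ ha) => // h0; rewrite -h0 Rmult_0_l in hab; lra.
have hb' : 0 < b.
  case: (Rle_lt_or_eq_dec _ _ hb) => // h0; rewrite -h0 Rmult_0_r in hab; lra.
rewrite !rpow_pos // Rpower_mult_distr //.
have hle : Rpower c r <= Rpower (a * b) r by apply: Rle_Rpower_l; lra.
have hcp := Rpower_pos c r.
apply: (Rmult_le_reg_r (Rpower c r)) => //.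
rewrite Rmult_assoc Rinv_l; lra.
Qed.

Lemma Am_pos s : (exists m, 0 < PM m) -> 0 < Am s.
Proof.
case=> m hm; rewrite /Am; apply: (@rsum_gt0 M (fun m => rpow (PM m) (1 - s)) m); first by move=> i; apply: rpow_ge0.
by rewrite /= rpow_pos //; apply: Rpower_pos.
Qed.

Lemma term2 s m x z : 0 < s <= / 2 ->
  PM m * PXZ (x, z) * Rmin 1 (K PXZ PM m (x, z) / INR #|X|) <=
  rpow (PM m) (1 - s) * (rpow (PXZ (x, z)) (1 - s) * Rpower (Am s * Az s z) (s / (1 - s)))
  * Rpower (INR #|X|) (- (s / (1 - s))).
Proof.
move=> hs.
have hn : 0 < INR #|X| := @nX_gt0 X.
set n := INR #|X| in hn *.
have hR : 0 <= rpow (PM m) (1 - s) * (rpow (PXZ (x, z)) (1 - s) * Rpower (Am s * Az s z) (s / (1 - s)))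
  * Rpower n (- (s / (1 - s))).
  apply: Rmult_le_pos; [apply: Rmult_le_pos; [apply: rpow_ge0 | apply: Rmult_le_pos; [apply: rpow_ge0|apply: Rlt_le; apply: Rpower_pos]] | apply: Rlt_le; apply: Rpower_pos].
case: (Rlt_dec 0 (PM m)) => hm; last first.
  have h0 : PM m = 0 by have := HPM m; lra.
  by rewrite h0 !Rmult_0_l; rewrite h0 in hR.
case: (Rlt_dec 0 (PXZ (x, z))) => hp; last first.
  have h0 : PXZ (x, z) = 0 by have := HPXZ (x, z); lra.
  by rewrite h0 Rmult_0_r !Rmult_0_l; rewrite h0 in hR.
have hA : 0 < Am s by apply: Am_pos; exists m.
have hAz : 0 < Az s z.
  apply: (@rsum_gt0 X (fun u => rpow (PXZ (u, z)) (1 - s)) x); first by move=> i; apply: rpow_ge0.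
  by rewrite /= rpow_pos //; apply: Rpower_pos.
rewrite !rpow_pos //.
set c := PM m * PXZ (x, z).
have hc : 0 < c by rewrite /c; pos.
have hK : K PXZ PM m (x, z) <= Am s * Az s z * / Rpower c (1 - s).
  rewrite /K /=.
  apply: Rle_trans (_ : _ <= \big[Rplus/0]_(m' : M) \big[Rplus/0]_(u : X)
     (rpow (PM m') (1 - s) * rpow (PXZ (u, z)) (1 - s) * / Rpower c (1 - s))) _.
    apply: rsum_le => m'; apply: rsum_le => u; apply: ileR_le2 => //; lra.
  by rewrite -prod_sums; apply: Req_le.
have hrho : 0 < s / (1 - s) <= 1.
  split; first by apply: Rdiv_lt_0_compat; lra.
  apply: (Rmult_le_reg_r (1 - s)); first lra.
  rewrite /Rdiv Rmult_assoc Rinv_l; lra.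
apply: Rle_trans (_ : _ <= c * Rpower (Am s * Az s z / Rpower c (1 - s) / n) (s / (1 - s))) _.
  apply: Rmult_le_compat_l; first lra.
  apply: Rle_trans (_ : _ <= Rmin 1 (Am s * Az s z / Rpower c (1 - s) / n)) _.
    apply: Rle_min_compat_l; apply: Rmult_le_compat_r; [apply: Rlt_le; apply: Rinv_0_lt_compat; exact: hn | exact: hK].
  apply: min_le_pow => //; rewrite /Rdiv; pos.
apply: Req_le.
have e1 : ln (Am s * Az s z / Rpower c (1 - s) / n) =
   ln (Am s) + ln (Az s z) - (1 - s) * (ln (PM m) + ln (PXZ (x, z))) - ln n.
  have hcp := Rpower_pos c (1 - s).
  rewrite /Rdiv ln_mult; last by pos.
    rewrite ln_mult; [| by pos | by pos].
    rewrite ln_Rinv // ln_Rinv // ln_mult // ln_Rpower /c ln_mult //; ring.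
  by pos.
rewrite /Rpower e1 ln_mult // /c -{1}(exp_ln (PM m) hm) -{1}(exp_ln (PXZ (x, z)) hp) -!exp_plus.
f_equal; field; lra.
Qed.

Lemma bound2 s : 0 < s <= / 2 ->
  Bp PXZ PM <= Am s * \big[Rplus/0]_(xz : X * Z)
     (rpow (PXZ xz) (1 - s) * Rpower (Am s * Az s xz.2) (s / (1 - s)))
     * Rpower (INR #|X|) (- (s / (1 - s))).
Proof.
move=> hs; rewrite prod_sums /Bp; apply: rsum_le => m; apply: rsum_le => -[x z].
exact: term2.
Qed.

Definition G (s : R) : R := \big[Rplus/0]_(z : Z) rpow (Az s z) (/ (1 - s)).

Lemma pair_sum (F : X * Z -> R) :
  \big[Rplus/0]_(xz : X * Z) F xz = \big[Rplus/0]_(z : Z) \big[Rplus/0]_(x : X) F (x, z).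
Proof.
rewrite exchange_big pair_big /=; apply: eq_bigr => -[x z] _; by [].
Qed.

Lemma sumE s : 0 < s < 1 -> (exists m, 0 < PM m) ->
  \big[Rplus/0]_(xz : X * Z)
     (rpow (PXZ xz) (1 - s) * Rpower (Am s * Az s xz.2) (s / (1 - s)))
  = Rpower (Am s) (s / (1 - s)) * G s.
Proof.
move=> hs hm; have hA := Am_pos s hm.
rewrite pair_sum /G rsum_distrl; apply: eq_bigr => z _ /=.
rewrite -rsum_distrr -/(Az s z).
case: (Rlt_dec 0 (Az s z)) => hz; last first.
  have h0 : Az s z = 0.
    have : 0 <= Az s z by apply: rsum_ge0 => u; apply: rpow_ge0.
    lra.
  by rewrite h0 rpow_npos ?Rmult_0_l ?Rmult_0_r //; exact: (Rlt_irrefl 0).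
rewrite rpow_pos // /Rpower ln_mult // -{1}(exp_ln (Az s z) hz) -!exp_plus.
f_equal; field; lra.
Qed.

Lemma G_pos s : (exists xz, 0 < PXZ xz) -> 0 < G s.
Proof.
case=> -[x z] hp; rewrite /G.
have hAz : 0 < Az s z.
  apply: (@rsum_gt0 X (fun u => rpow (PXZ (u, z)) (1 - s)) x); first by move=> i; apply: rpow_ge0.
  by rewrite /= rpow_pos //; apply: Rpower_pos.
apply: (@rsum_gt0 Z (fun z => rpow (Az s z) (/ (1 - s))) z); first by move=> i; apply: rpow_ge0.
by rewrite /= rpow_pos //; apply: Rpower_pos.
Qed.

Lemma U_eq s : 0 < s < 1 -> (exists xz, 0 < PXZ xz) ->
  \big[Rplus/0]_(xz : X * Z) (if Rlt_dec 0 (PXZ xz)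
      then Rpower (PXZ xz) (1 - s) * rpow (tiltedZ PXZ s xz.2) s else 0)
  = Rpower (G s) (1 - s).
Proof.
move=> hs hxz; have hG := G_pos s hxz.
rewrite pair_sum.
rewrite (eq_bigr (fun z => rpow (Az s z) (/ (1 - s)) * Rpower (G s) (- s))); last first.
  move=> z _ /=.
  rewrite (eq_bigr (fun x => rpow (PXZ (x, z)) (1 - s) * rpow (tiltedZ PXZ s z) s)); last first.
    move=> x _; rewrite /rpow; case: Rlt_dec => h //=; by rewrite Rmult_0_l.
  rewrite -rsum_distrr -/(Az s z).
  have ht : tiltedZ PXZ s z = rpow (Az s z) (/ (1 - s)) / G s by [].
  rewrite ht.
  case: (Rlt_dec 0 (Az s z)) => hz; last first.
    have h0 : Az s z = 0.
      have : 0 <= Az s z by apply: rsum_ge0 => u; apply: rpow_ge0.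
      lra.
    rewrite h0 (@rpow_npos 0 (/ (1 - s))); last exact: (Rlt_irrefl 0).
    by rewrite !Rmult_0_l.
  rewrite (rpow_pos _ hz).
  have hg := Rpower_pos (Az s z) (/ (1 - s)).
  rewrite rpow_pos; last by rewrite /Rdiv; pos.
  rewrite /Rpower /Rdiv ln_mult; [| by [] | by pos].
  rewrite ln_Rinv // ln_exp -{1}(exp_ln (Az s z) hz) -!exp_plus.
  f_equal; field; lra.
rewrite -rsum_distrr -/(G s).
rewrite -{1}(Rpower_1 (G s) hG) -Rpower_plus; f_equal.
Qed.

End Bounds.

Lemma final1 A D n s : 0 < A -> 0 < D -> 0 < n -> 0 < s ->
  Rpower (exp (/ s * ln A + / s * ln D) / n) s = A * D * Rpower n (- s).
Proof.
move=> hA hD hn hs.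
rewrite /Rpower /Rdiv ln_mult; [| by apply: exp_pos | by pos].
rewrite ln_exp ln_Rinv // -{2}(exp_ln A hA) -{2}(exp_ln D hD) -!exp_plus.
f_equal; field; lra.
Qed.

Lemma final2 A Gs n s : 0 < A -> 0 < Gs -> 0 < n -> 0 < s < 1 ->
  Rpower (exp (/ s * ln A + / s * ln (Rpower Gs (1 - s))) / n) (s / (1 - s)) =
  A * (Rpower A (s / (1 - s)) * Gs) * Rpower n (- (s / (1 - s))).
Proof.
move=> hA hG hn hs.
rewrite /Rpower /Rdiv ln_mult; [| by apply: exp_pos | by pos].
rewrite ln_exp ln_Rinv // ln_exp -{2}(exp_ln A hA) -{2}(exp_ln Gs hG) -!exp_plus.
f_equal; field; lra.
Qed.

Unset Implicit Arguments.

Theorem mainTheorem5 (X : finZmodType) (Z M : finType)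
  (PXZ : X * Z -> R) (PM : M -> R) :
  is_distr PXZ -> is_distr PM ->
  (forall s, 0 < s < 1 ->
     Pjs PM (add_channel PXZ) <=
     Rpower (exp (renyiH PM s + renyiH_down PXZ s) / INR #|X|) s) /\
  (forall s, 0 < s <= / 2 ->
     Pjs PM (add_channel PXZ) <=
     Rpower (exp (renyiH PM s + renyiH_up PXZ s) / INR #|X|) (s / (1 - s))).
Proof.
move=> HP HM.
have [HPXZ _] := HP; have [HPM HsumM] := HM.
have [m0 hm0] := distr_pos HM.
have [xz0 hxz0] := distr_pos HP.
have hn : 0 < INR #|X| := @nX_gt0 X.
have [e [d hcode]] := @exists_code X Z M PXZ PM m0 HPXZ HPM.
have hPjs : Pjs PM (add_channel PXZ) <= Bp PXZ PM.
  apply: Rle_trans hcode; apply: Pjs_le => // y x; exact: HPXZ.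
have hA : forall s, 0 < Am PM s by move=> s; apply: Am_pos; exists m0.
split.
- move=> s hs.
  apply: Rle_trans hPjs _; apply: Rle_trans (bound1 HPXZ HPM HsumM hs) _.
  have hD : 0 < \big[Rplus/0]_(xz : X * Z) Dt PXZ s xz.
    apply: (@rsum_gt0 _ (Dt PXZ s) xz0); first by move=> i; apply: Dt_ge0.
    rewrite /Dt; case: Rlt_dec => // hh /=; apply: Rmult_lt_0_compat; first exact: Rpower_pos.
    case: xz0 hxz0 hh => x z hxz0 hh /=.
    have hpz : PXZ (x, z) <= marginalZ PXZ z.
      rewrite /marginalZ; exact: (@rsum_ge_term X (fun x' => PXZ (x', z)) x (fun x' => HPXZ _)).
    rewrite rpow_pos; [exact: Rpower_pos | lra].
  apply: Req_le; rewrite -(final1 (hA s) hD hn (proj1 hs)).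
  by [].
- move=> s hs.
  have hs' : 0 < s < 1 by lra.
  apply: Rle_trans hPjs _; apply: Rle_trans (bound2 HPXZ HPM hs) _.
  rewrite sumE //; last by exists m0.
  have hG := G_pos s (ex_intro _ xz0 hxz0).
  apply: Req_le; rewrite -(final2 (hA s) hG hn hs').
  rewrite /renyiH_up /renyiH_cond U_eq //; last by exists xz0.
Qed.
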